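(* Let $(A,E)$ be the direct producted noncommutative probability space over $D_N$ of noncommutative probability spaces $(A_1,\varphi_1),\dots,(A_N,\varphi_N)$. For $j=1,\dots,N$ let $A_j'=\{(0,\dots,0,a_j,0,\dots,0):a_j\in A_j\}\subset A$ be the embedding of $A_j$ into the $j$-th coordinate. Then $A_1',\dots,A_N'$ are free over $D_N$ in $(A,E)$.
   Context: Each $(A_j,\varphi_j)$ is a unital complex algebra with a linear functional. $A=\times_{j=1}^N A_j$ with componentwise operations; $D_N=\mathbb{C}^N$ with componentwise operations, identified with the central subalgebra $\{(\alpha_1 1,\dots,\alpha_N 1)\}$ of $A$; $E((a_1,\dots,a_N))=(\varphi_1(a_1),\dots,\varphi_N(a_N))$. $D_N$-valued cumulants: $k_n(y_1,\dots,y_n)=\sum_{\pi\in NC(n)}\prod_{V\in\pi}E(\prod_{l\in V}y_l)\,\mu(\pi,1_n)$. Subsets $S_1,\dots,S_N$ of $A$ are free over $D_N$ if all mixed $D_N$-valued cumulants of elements of the algebras generated by $S_i\cup D_N$ vanish. *)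

(* Defs.v *)
From HB Require Import structures.
From mathcomp Require Import all_boot all_order all_algebra.
From mathcomp Require Import reals complex.
Set Implicit Arguments. Unset Strict Implicit. Unset Printing Implicit Defensive.
Import Order.TTheory GRing.Theory Num.Theory.
Local Open Scope ring_scope.

Definition is_set_partition (n : nat) (P : {set {set 'I_n}}) : bool :=
  partition P [set: 'I_n].

Definition noncrossing (n : nat) (P : {set {set 'I_n}}) : bool :=
  [forall V in P, forall W in P, (V != W) ==>
     [forall a : 'I_n, forall b : 'I_n, forall c : 'I_n, forall d : 'I_n,
        ~~ [&& (a < b)%N, (b < c)%N, (c < d)%N,
               a \in V, c \in V, b \in W & d \in W]]].

Definition NC (n : nat) : {pred {set {set 'I_n}}} :=
  [pred P | is_set_partition P && noncrossing P].

Definition refines (n : nat) (pi sigma : {set {set 'I_n}}) : bool :=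
  [forall V in pi, exists W in sigma, V \subset W].

Definition one_part (n : nat) : {set {set 'I_n}} := [set [set: 'I_n]].

(** The fuel k bounds the length of chains; #|T| fuel suffices. *)
Fixpoint mob_fuel (T : finType) (S : {pred T}) (le : rel T) (k : nat) (x y : T)
  : int :=
  if x == y then 1 else
  match k with
  | 0 => 0
  | k'.+1 =>
      if (x \in S) && (y \in S) && le x y then
        - \sum_(z : T | [&& z \in S, le x z, le z y & z != y])
            mob_fuel S le k' x z
      else 0
  end.

Definition moebius (T : finType) (S : {pred T}) (le : rel T) (x y : T) : int :=
  mob_fuel S le #|T| x y.

Definition muNC (n : nat) (pi : {set {set 'I_n}}) : int :=
  moebius (@NC n) (@refines n) pi (@one_part n).

Section DirectProduct.
Variables (R : realType) (N : nat).
Local Notation C := (R[i]).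
Variable Aj : 'I_N -> algType C.
Variable phi : forall j, {scalar Aj j}.

Definition prodA := forall j : 'I_N, Aj j.
Definition DN := 'I_N -> C.

Definition addA (x y : prodA) : prodA := fun j => x j + y j.
Definition mulA (x y : prodA) : prodA := fun j => x j * y j.
Definition scaleA (c : C) (x : prodA) : prodA := fun j => c *: x j.
Definition embedD (d : DN) : prodA := fun j => d j *: 1.
Definition Eexp (x : prodA) : DN := fun j => phi j (x j).

Definition blockprod (n : nat) (y : 'I_n -> prodA) (V : {set 'I_n}) : prodA :=
  fun j => \prod_(l < n | l \in V) y l j.

(* D_N-valued cumulant
   k_n(y_1..y_n) = sum_{pi in NC(n)} prod_{V in pi} E(prod_{l in V} y_l) mu(pi,1_n);
   the operations in D_N = C^N are componentwise, so we write component j. *)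
Definition cumulant (n : nat) (y : 'I_n -> prodA) : DN :=
  fun j => \sum_(pi in @NC n)
             (\prod_(V in pi) Eexp (blockprod y V) j) * (muNC pi)%:~R.

Definition gen_alg (S : prodA -> Prop) (x : prodA) : Prop :=
  forall B : prodA -> Prop,
    (forall s, S s -> B s) ->
    (forall d, B (embedD d)) ->
    (forall u v, B u -> B v -> B (addA u v)) ->
    (forall c u, B u -> B (scaleA c u)) ->
    (forall u v, B u -> B v -> B (mulA u v)) ->
    B x.

Definition free_over_DN (S : 'I_N -> prodA -> Prop) : Prop :=
  forall (n : nat) (idx : 'I_n -> 'I_N) (y : 'I_n -> prodA),
    (forall l, gen_alg (S (idx l)) (y l)) ->
    (exists l l', idx l != idx l') ->
    cumulant y = (fun _ => 0).

Definition coord_subalg (i : 'I_N) (x : prodA) : Prop :=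
  forall j : 'I_N, j != i -> x j = 0.

End DirectProduct.

(* Main.v *)
Require Import Defs.
From HB Require Import structures.
From mathcomp Require Import all_boot all_order all_algebra.
From mathcomp Require Import reals complex.
Import GRing.Theory Num.Theory.
Local Open Scope ring_scope.
Set Implicit Arguments. Unset Strict Implicit. Unset Printing Implicit Defensive.
From Stdlib Require Import FunctionalExtensionality.

Section Mob.
Variables (T : finType) (S : {pred T}) (le : rel T).
Hypothesis le_refl : forall x, x \in S -> le x x.
Hypothesis le_anti : forall x y, x \in S -> y \in S -> le x y -> le y x -> x = y.
Hypothesis le_trans : forall x y z, x \in S -> y \in S -> z \in S ->
  le x y -> le y z -> le x z.

Definition hgt y := #|[pred z | (z \in S) && le z y]|.

Lemma hgt_lt z y : z \in S -> y \in S -> le z y -> z != y -> (hgt z < hgt y)%N.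
Proof.
move=> zS yS lzy zny; apply: proper_card; apply/properP; split.
  apply/subsetP => w; rewrite !inE => /andP[wS lwz].
  by rewrite wS (le_trans wS zS yS).
exists y; first by rewrite inE yS le_refl.
rewrite inE yS /=; apply/negP => lyz; move/negP: zny; apply.
by apply/eqP; apply: le_anti.
Qed.

Lemma fuel_step k x y : (hgt y <= k)%N ->
  mob_fuel S le k x y = mob_fuel S le k.+1 x y.
Proof.
elim: k x y => [|k IH] x y hk.
  rewrite /=; case: (x == y) => //.
  have yS : y \notin S.
    apply/negP => yS; move: hk; rewrite leqn0 => /eqP/card0_eq/(_ y).
    by rewrite inE yS le_refl.
  by rewrite (negbTE yS) andbF.
rewrite [LHS]/= [RHS]/=; case: (x == y) => //.
case: ifP => // /andP[/andP[xS yS] lxy]; congr (- _).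
apply: eq_bigr => z /and4P[zS lxz lzy zny]; apply: IH.
by rewrite -ltnS (leq_trans (hgt_lt zS yS lzy zny)).
Qed.

Lemma fuel_ge k x y : (hgt y <= k)%N ->
  mob_fuel S le k x y = mob_fuel S le (hgt y) x y.
Proof.
move=> hk; rewrite -(subnKC hk); elim: (k - hgt y)%N => [|d IH].
  by rewrite addn0.
by rewrite addnS -fuel_step ?IH // leq_addr.
Qed.

Lemma moebiusE x y : moebius S le x y = mob_fuel S le (hgt y) x y.
Proof. by rewrite /moebius fuel_ge // max_card. Qed.

Lemma moebius_id x : moebius S le x x = 1.
Proof. by rewrite /moebius; case: #|T| => [|k] /=; rewrite eqxx. Qed.

Lemma moebius_rec x y : x != y -> x \in S -> y \in S -> le x y ->
  moebius S le x y =
  - \sum_(z | [&& z \in S, le x z, le z y & z != y]) moebius S le x z.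
Proof.
move=> xny xS yS lxy; rewrite moebiusE.
have : (0 < hgt y)%N by apply/card_gt0P; exists y; rewrite inE yS le_refl.
case E : (hgt y) => [//|m] _ /=.
rewrite (negbTE xny) xS yS lxy /=; congr (- _).
apply: eq_bigr => z /and4P[zS lxz lzy zny].
rewrite moebiusE fuel_ge //.
by rewrite -ltnS -E hgt_lt.
Qed.

Lemma moebius_sum x y : x \in S -> y \in S ->
  \sum_(z | [&& z \in S, le x z & le z y]) moebius S le x z = (x == y)%:R.
Proof.
move=> xS yS; case: (eqVneq x y) => [<-|xny].
  rewrite (big_pred1 x) ?moebius_id //.
  move=> z /=; apply/idP/eqP => [/and3P[zS lxz lzx]|->].
    by apply: le_anti.
  by rewrite xS le_refl.
case lxy : (le x y); last first.
  rewrite big1 // => z /and3P[zS lxz lzy].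
  by rewrite (le_trans xS zS yS lxz lzy) in lxy.
rewrite (bigD1 y) /=; last by rewrite yS lxy le_refl.
rewrite moebius_rec // addrC.
rewrite (eq_bigl (fun z => [&& z \in S, le x z, le z y & z != y])).
  by rewrite addrN.
by move=> z; rewrite !andbA.
Qed.


Lemma moebius_out x z : x \in S -> ~~ le x z -> moebius S le x z = 0.
Proof.
move=> xS nlxz; rewrite /moebius; case: #|T| => [|k] /=.
  by case: eqP => // exz; rewrite -exz le_refl in nlxz.
case: eqP => [exz|_]; first by rewrite -exz le_refl in nlxz.
by rewrite (negbTE nlxz) andbF.
Qed.
End Mob.

Section Dual.
Variables (T : finType) (S : {pred T}) (le : rel T).
Hypothesis le_refl : forall x, x \in S -> le x x.
Hypothesis le_anti : forall x y, x \in S -> y \in S -> le x y -> le y x -> x = y.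
Hypothesis le_trans : forall x y z, x \in S -> y \in S -> z \in S ->
  le x y -> le y z -> le x z.
Let led := fun a b => le b a.
Let led_refl : forall x, x \in S -> led x x. Proof. exact: le_refl. Qed.
Let led_anti : forall x y, x \in S -> y \in S -> led x y -> led y x -> x = y.
Proof. by move=> x y xS yS h1 h2; apply: le_anti. Qed.
Let led_trans : forall x y z, x \in S -> y \in S -> z \in S ->
  led x y -> led y z -> led x z.
Proof. by move=> x y z xS yS zS h1 h2; apply: (le_trans zS yS xS). Qed.

Let Z a b : int := ((a \in S) && (b \in S) && le a b)%:R.

Let MZ x w : x \in S -> \sum_z moebius S le x z * Z z w = (x == w)%:R.
Proof.
move=> xS; case: (boolP (w \in S)) => wS; last first.
  rewrite big1; last by move=> z _; rewrite /Z (negbTE wS) andbF mulr0.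
  by case: eqP => // exw; rewrite -exw xS in wS.
rewrite -(moebius_sum le_refl le_anti le_trans xS wS) [RHS]big_mkcond.
apply: eq_bigr => z _; rewrite /Z wS andbT.
case: (boolP (le x z)) => lxz; last first.
  by rewrite moebius_out // mul0r; case: ifP.
by case: (z \in S); case: (le z w); rewrite /= ?mulr1 ?mulr0.
Qed.

Let ZR z y : y \in S -> \sum_w Z z w * moebius S led y w = (z == y)%:R.
Proof.
move=> yS; case: (boolP (z \in S)) => zS; last first.
  rewrite big1; last by move=> w _; rewrite /Z (negbTE zS) mul0r.
  by case: eqP => // ezy; rewrite ezy yS in zS.
rewrite eq_sym.
rewrite -(moebius_sum led_refl led_anti led_trans yS zS) [RHS]big_mkcond.
apply: eq_bigr => w _; rewrite /Z zS /=.
case: (boolP (led y w)) => lyw; last first.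
  by rewrite (moebius_out led_refl) // mulr0; case: ifP.
by rewrite /led /=; case: (w \in S); case: (le z w); rewrite /= ?mul1r ?mul0r.
Qed.

Lemma moebius_dual x y : x \in S -> y \in S ->
  moebius S le x y = moebius S led y x.
Proof.
move=> xS yS.
have E1 : \sum_z moebius S le x z * (\sum_w Z z w * moebius S led y w)
        = moebius S le x y.
  under eq_bigr => z _ do rewrite ZR //.
  rewrite (bigD1 y) //= eqxx mulr1 big1 ?addr0 // => z /negbTE ->.
  by rewrite mulr0.
have E2 : \sum_z moebius S le x z * (\sum_w Z z w * moebius S led y w)
        = moebius S led y x.
  under eq_bigr => z _ do rewrite mulr_sumr.
  rewrite exchange_big /=.
  under eq_bigr => w _ do (under eq_bigr => z _ do rewrite mulrA; rewrite -mulr_suml MZ //).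
  rewrite (bigD1 x) //= eqxx mul1r big1 ?addr0 // => w.
  by rewrite eq_sym => /negbTE ->; rewrite mul0r.
by rewrite -E1 E2.
Qed.

Lemma moebius_sum_right x y : x \in S -> y \in S ->
  \sum_(z | [&& z \in S, le x z & le z y]) moebius S le z y = (x == y)%:R.
Proof.
move=> xS yS.
rewrite (eq_bigr (fun z => moebius S led y z)); last first.
  by move=> z /andP[zS _]; rewrite moebius_dual.
rewrite eq_sym -(moebius_sum led_refl led_anti led_trans yS xS).
by apply: eq_bigl => z; rewrite /led [le x z && _]andbC.
Qed.
End Dual.

Section Main.
Variables (K : comPzRingType) (T : finType) (S S' : {pred T}) (le : rel T).
Hypothesis le_refl : forall x, x \in S -> le x x.
Hypothesis le_anti : forall x y, x \in S -> y \in S -> le x y -> le y x -> x = y.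
Hypothesis le_trans : forall x y z, x \in S -> y \in S -> z \in S ->
  le x y -> le y z -> le x z.
Variables (t : T) (p : T -> T) (Phi : T -> K).
Hypothesis S'S : forall x, x \in S' -> x \in S.
Hypothesis tS : t \in S.
Hypothesis le_t : forall x, x \in S -> le x t.
Hypothesis tS' : t \notin S'.
Hypothesis pS : forall x, x \in S -> p x \in S'.
Hypothesis p_le : forall x, x \in S -> le (p x) x.
Hypothesis p_max : forall x s, x \in S -> s \in S' -> le s x -> le s (p x).
Hypothesis Phip : forall x, x \in S -> Phi (p x) = Phi x.

Lemma intr_sum (I : Type) (r : seq I) (P : pred I) (F : I -> int) :
  ((\sum_(i <- r | P i) F i)%:~R : K) = \sum_(i <- r | P i) (F i)%:~R.
Proof. by rewrite (big_morph (fun z : int => (z%:~R : K)) (@intrD K) (mulr0z 1)). Qed.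

Lemma inversion_zero :
  \sum_(x | x \in S) Phi x * (moebius S le x t)%:~R = 0.
Proof.
have le_refl' : forall x, x \in S' -> le x x by move=> x /S'S; apply: le_refl.
have le_anti' : forall x y, x \in S' -> y \in S' -> le x y -> le y x -> x = y.
  by move=> x y /S'S xS /S'S yS; apply: le_anti.
have le_trans' : forall x y z, x \in S' -> y \in S' -> z \in S' ->
    le x y -> le y z -> le x z.
  by move=> x y z /S'S xS /S'S yS /S'S zS; apply: le_trans.
pose g tau := \sum_(rho | (rho \in S') && le rho tau)
                 Phi rho * (moebius S' le rho tau)%:~R.
have inv : forall s, s \in S' ->
    \sum_(tau | (tau \in S') && le tau s) g tau = Phi s.
  move=> s sS; rewrite /g.
  rewrite (exchange_big_dep (fun rho => rho \in S')) /=; last first.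
    by move=> i j _ /andP[].
  under eq_bigr => rho rS.
    rewrite -mulr_sumr -intr_sum.
    rewrite (eq_bigl (fun tau => [&& tau \in S', le rho tau & le tau s])); last first.
      by move=> tau /=; rewrite rS; case: (tau \in S'); case: (le rho tau); case: (le tau s).
    rewrite (moebius_sum le_refl' le_anti' le_trans' rS sS).
  over.
  rewrite (bigD1 s) //= eqxx mulr1 big1 ?addr0 // => rho /andP[_ /negbTE ->].
  by rewrite mulr0.
have PhiE : forall x, x \in S ->
    Phi x = \sum_(tau | (tau \in S') && le tau x) g tau.
  move=> x xS; rewrite -Phip // -inv ?pS //.
  apply: eq_bigl => tau; case: (boolP (tau \in S')) => //= tS1.
  apply/idP/idP => [h|h]; last exact: p_max.
  exact: (le_trans (S'S tS1) (S'S (pS xS)) xS h (p_le xS)).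
under eq_bigr => x xS do rewrite PhiE // mulr_suml.
rewrite (exchange_big_dep (fun tau => tau \in S')) /=; last first.
  by move=> i j _ /andP[].
rewrite big1 // => tau tS1.
rewrite -mulr_sumr -intr_sum.
rewrite (eq_bigl (fun x => [&& x \in S, le tau x & le x t])); last first.
  move=> x; rewrite tS1 /=; case: (boolP (x \in S)) => //= xS.
  by rewrite le_t // andbT.
rewrite (moebius_sum_right le_refl le_anti le_trans (S'S tS1) tS).
case: eqP => [et|]; last by rewrite mulr0.
by move: tS'; rewrite -et tS1.
Qed.
End Main.

Section Part.
Variable n : nat.
Implicit Types P Q : {set {set 'I_n}}.

Lemma part_cover P x : is_set_partition P -> exists2 B, B \in P & x \in B.
Proof.
move=> hP; have : x \in cover P by rewrite (cover_partition hP) inE.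
by move/bigcupP.
Qed.

Lemma part_eq P A B x : is_set_partition P -> A \in P -> B \in P ->
  x \in A -> x \in B -> A = B.
Proof.
move=> hP AP BP xA xB; apply/eqP; apply/negPn/negP => nAB.
have := trivIsetP (partition_trivIset hP) A B AP BP nAB.
by move/disjointFr/(_ xA); rewrite xB.
Qed.

Lemma part_ne0 P A : is_set_partition P -> A \in P -> exists x, x \in A.
Proof.
move=> hP AP; have := partition_neq0 hP AP.
by case/set0Pn => x; exists x.
Qed.

Lemma refines_refl P : refines P P.
Proof. by apply/forallP => V; apply/implyP => VP; apply/existsP; exists V; rewrite VP subxx. Qed.

Lemma refinesP P Q : reflect (forall V, V \in P -> exists2 W, W \in Q & V \subset W)
  (refines P Q).
Proof.
apply: (iffP forallP) => [h V VP|h V].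
  by have /implyP/(_ VP)/existsP[W /andP[WQ sVW]] := h V; exists W.
apply/implyP => VP; have [W WQ sVW] := h V VP.
by apply/existsP; exists W; rewrite WQ.
Qed.

Lemma refines_trans P Q R : refines P Q -> refines Q R -> refines P R.
Proof.
move=> /refinesP h1 /refinesP h2; apply/refinesP => V VP.
have [W WQ sVW] := h1 V VP; have [U UR sWU] := h2 W WQ.
by exists U => //; apply: subset_trans sWU.
Qed.

Lemma refines_anti P Q : is_set_partition P -> is_set_partition Q ->
  refines P Q -> refines Q P -> P = Q.
Proof.
move=> hP hQ r1 r2.
have key : forall P Q, is_set_partition P -> refines P Q -> refines Q P ->
    P \subset Q.
  move=> P1 Q1 hP1 /refinesP s1 /refinesP s2; apply/subsetP => V VP.
  have [W WQ sVW] := s1 V VP; have [V' V'P sWV'] := s2 W WQ.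
  have [x xV] := part_ne0 hP1 VP.
  have eV : V = V'.
    by apply: (part_eq hP1 VP V'P xV); apply: (subsetP sWV'); apply: (subsetP sVW).
  suff -> : V = W by [].
  by apply/eqP; rewrite eqEsubset sVW; rewrite eV.
by apply/eqP; rewrite eqEsubset !key.
Qed.

Lemma NCE P : (P \in @NC n) = is_set_partition P && noncrossing P.
Proof. by []. Qed.


Lemma disjI (A B : {set 'I_n}) :
  (forall x, x \in A -> x \in B -> False) -> [disjoint A & B].
Proof.
move=> h; rewrite disjoint_subset; apply/subsetP => x xA.
by rewrite inE; apply/negP => xB; exact: h x xA xB.
Qed.

Lemma ncE P : noncrossing P -> forall V W (a b c d : 'I_n), V \in P -> W \in P ->
  V != W -> (a < b)%N -> (b < c)%N -> (c < d)%N ->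
  a \in V -> c \in V -> b \in W -> d \in W -> False.
Proof.
move=> /forallP h V W a b c d VP WP nVW ab bc cd aV cV bW dW.
move: (h V) => /implyP/(_ VP)/forallP/(_ W)/implyP/(_ WP)/implyP/(_ nVW).
move=> /forallP/(_ a)/forallP/(_ b)/forallP/(_ c)/forallP/(_ d).
by rewrite ab bc cd aV cV bW dW.
Qed.

Lemma ncI P : (forall V W (a b c d : 'I_n), V \in P -> W \in P ->
  V != W -> (a < b)%N -> (b < c)%N -> (c < d)%N ->
  a \in V -> c \in V -> b \in W -> d \in W -> False) -> noncrossing P.
Proof.
move=> h; apply/forallP => V; apply/implyP => VP; apply/forallP => W.
apply/implyP => WP; apply/implyP => nVW.
apply/forallP => a; apply/forallP => b; apply/forallP => c; apply/forallP => d.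
apply/negP => /andP[ab /andP[bc /andP[cd /andP[aV /andP[cV /andP[bW dW]]]]]].
exact: (h V W a b c d).
Qed.

Variable k : 'I_n.

Definition pk P : {set {set 'I_n}} :=
  [set k] |: [set V :\ k | V in P :\ [set k]].

Lemma pkP P W : reflect (W = [set k] \/ exists2 V, (V \in P) && (V != [set k]) & W = V :\ k)
  (W \in pk P).
Proof.
apply: (iffP setU1P) => [[->|/imsetP[V]]|[->|[V hV ->]]].
- by left.
- by rewrite in_setD1 andbC => hV ->; right; exists V.
- by left.
- by right; apply/imsetP; exists V; rewrite // in_setD1 andbC.
Qed.

Lemma pk_sing P : [set k] \in pk P.
Proof. exact: setU11. Qed.

Section PkProps.
Variable P : {set {set 'I_n}}.
Hypothesis hP : is_set_partition P.

Lemma pk_blk V : V \in P -> V != [set k] -> exists x, x \in V :\ k.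
Proof.
move=> VP nV; case: (set_0Vmem (V :\ k)) => [e|[x xV]]; last by exists x.
have hV : forall y, y \in V -> y = k.
  move=> y yV; apply/eqP/negPn/negP => nyk.
  by have := in_set0 y; rewrite -e in_setD1 nyk yV.
have [x xV] := part_ne0 hP VP.
case/negP: nV; apply/eqP/setP => y; rewrite inE.
apply/idP/eqP => [/hV //|->]; by rewrite -(hV x xV).
Qed.

Lemma pk_part : is_set_partition (pk P).
Proof.
apply/and3P; split.
- apply/eqP/setP => x; rewrite inE; apply/bigcupP.
  case: (eqVneq x k) => [->|nxk].
    by exists [set k]; rewrite ?pk_sing ?set11.
  have [V VP xV] := part_cover x hP.
  have nV : V != [set k].
    by apply/negP => /eqP eV; move: xV; rewrite eV inE (negbTE nxk).
  by exists (V :\ k); [apply/pkP; right; exists V; rewrite ?VP | rewrite in_setD1 nxk].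
- apply/trivIsetP => A B /pkP hA /pkP hB nAB; apply: disjI => x xA xB.
  case: hA => [eA|[V /andP[VP nV] eA]]; case: hB => [eB|[W /andP[WP nW] eB]].
  + by rewrite eA eB eqxx in nAB.
  + by move: xA xB; rewrite eA eB inE => /eqP ->; rewrite in_setD1 eqxx.
  + by move: xA xB; rewrite eA eB in_setD1 => /andP[nxk _]; rewrite inE => /eqP xk; rewrite xk eqxx in nxk.
  + move: xA xB; rewrite eA eB !in_setD1 => /andP[_ xV] /andP[_ xW].
    have eVW := part_eq hP VP WP xV xW.
    by rewrite eA eB eVW eqxx in nAB.
- apply/negP => /pkP [e|[V /andP[VP nV] e]].
    by have := set11 k; rewrite -e inE.
  have [x] := pk_blk VP nV; by rewrite -e inE.
Qed.

Lemma pk_nc : noncrossing P -> noncrossing (pk P).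
Proof.
move=> nc; apply: ncI => V' W' a b c d /pkP hV /pkP hW nVW ab bc cd aV cV bW dW.
case: hV => [eV|[V /andP[VP _] eV]].
  move: aV cV; rewrite eV !inE => /eqP ea /eqP ec.
  by move: (ltn_trans ab bc); rewrite ea ec ltnn.
case: hW => [eW|[W /andP[WP _] eW]].
  move: bW dW; rewrite eW !inE => /eqP eb /eqP ed.
  by move: (ltn_trans bc cd); rewrite eb ed ltnn.
move: aV cV bW dW; rewrite eV eW !in_setD1 => /andP[_ aV] /andP[_ cV] /andP[_ bW] /andP[_ dW].
have nVW' : V != W by apply: contraNneq nVW => e; rewrite eV eW e.
exact: (ncE nc VP WP nVW' ab bc cd aV cV bW dW).
Qed.

Lemma pk_le : refines (pk P) P.
Proof.
apply/refinesP => W /pkP [->|[V /andP[VP _] ->]].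
  have [B BP kB] := part_cover k hP.
  by exists B; rewrite // sub1set.
by exists V; rewrite // subsetDl.
Qed.

Lemma pk_max s : is_set_partition s -> [set k] \in s -> refines s P ->
  refines s (pk P).
Proof.
move=> hs ks /refinesP h; apply/refinesP => V Vs.
case: (eqVneq V [set k]) => [->|nV]; first by exists [set k]; rewrite ?pk_sing.
have [W WP sVW] := h V Vs.
have kV : k \notin V.
  by apply/negP => kV; move/eqP: nV; apply; apply: (part_eq hs Vs ks kV); rewrite set11.
have nW : W != [set k].
  apply/negP => /eqP eW; have [x xV] := part_ne0 hs Vs.
  have := subsetP sVW x xV; rewrite eW inE => /eqP exk.
  by rewrite -exk xV in kV.
exists (W :\ k); first by apply/pkP; right; exists W; rewrite ?WP.
apply/subsetP => x xV; rewrite in_setD1 (subsetP sVW x xV) andbT.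
by apply: contraNneq kV => <-.
Qed.
End PkProps.
End Part.

Section PhiSec.
Variables (R : realType) (A : algType R[i]) (phi : {scalar A}).
Hypothesis phi1 : phi 1 = 1.
Variables (n : nat) (k : 'I_n) (a : 'I_n -> A) (c : R[i]).
Hypothesis ak : a k = c *: 1.

Definition psi (V : {set 'I_n}) := phi (\prod_(l < n | l \in V) a l).
Definition Phi (P : {set {set 'I_n}}) := \prod_(V in P) psi V.

Lemma blk_scalar (V : {set 'I_n}) : \prod_(l < n | l \in V) a l =
  (if k \in V then c else 1) *: \prod_(l < n | l \in V :\ k) a l.
Proof.
pose s l : R[i] := if l == k then c else 1.
pose G l : A := if l == k then 1 else a l.
rewrite (eq_bigr (fun l => s l *: G l)); last first.
  by move=> l _; rewrite /s /G; case: eqP => [->|_]; rewrite ?ak ?scale1r.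
rewrite scaler_prod; congr (_ *: _).
  rewrite -big_mkcondr /=.
  case: (boolP (k \in V)) => kV.
    rewrite (big_pred1 k) // => l /=; apply/andP/eqP => [[_ /eqP //]|->]; by split.
  rewrite big_pred0 // => l /=; apply/andP => -[lV /eqP elk].
  by rewrite -elk lV in kV.
rewrite big_mkcond [RHS]big_mkcond; apply: eq_bigr => l _.
rewrite /G in_setD1; case: eqP => [->|_] /=; first by case: ifP.
by [].
Qed.

Lemma psiE (V : {set 'I_n}) : psi V = (if k \in V then c else 1) * psi (V :\ k).
Proof. by rewrite {1}/psi blk_scalar linearZ. Qed.

Lemma psi_k : psi [set k] = c.
Proof.
rewrite psiE set11 setDv /psi big_pred0 ?phi1 ?mulr1 // => l.
by rewrite in_set0.
Qed.

Lemma psi0 : psi set0 = 1.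
Proof. by rewrite /psi big_pred0 ?phi1 // => l; rewrite in_set0. Qed.

Lemma Phi_pk P : is_set_partition P -> Phi (pk k P) = Phi P.
Proof.
move=> hP; rewrite /Phi /pk big_setU1 /=; last first.
  apply/imsetP => -[V _ e]; have := set11 k; rewrite e in_setD1 eqxx //.
rewrite big_imset /=; last first.
  move=> V W; rewrite !in_setD1 => /andP[nV VP] /andP[nW WP] e.
  have [x xV] := pk_blk hP VP nV.
  have xW : x \in W :\ k by rewrite -e.
  move: xV xW; rewrite !in_setD1 => /andP[_ xV] /andP[_ xW].
  exact: (part_eq hP VP WP xV xW).
rewrite psi_k.
under [RHS]eq_bigr => V _ do rewrite psiE.
rewrite big_split /=.
have [B BP kB] := part_cover k hP.
have HS : \prod_(V in P) (if k \in V then c else 1) = c.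
  rewrite (bigD1 B) //= kB big1 ?mulr1 // => V /andP[VP nVB]; case: ifP => // kV.
  by rewrite (part_eq hP VP BP kV kB) eqxx in nVB.
rewrite HS; congr (_ * _).
rewrite [in RHS](bigID (fun V => V == [set k])) /= [in RHS]big1 ?mul1r; last first.
  by move=> V /andP[_ /eqP ->]; rewrite setDv psi0.
by apply: eq_bigl => V; rewrite in_setD1 andbC.
Qed.
End PhiSec.

Unset Implicit Arguments.

Theorem mainTheorem5 (R : realType) (N : nat) (Aj : 'I_N -> algType R[i])
    (phi : forall j, {scalar Aj j})
    (phi1 : forall j, phi j 1 = 1) :
  free_over_DN phi (@coord_subalg R N Aj).
Proof.
move=> n idx y Hy [l [l' hll']].
apply: functional_extensionality => j.
have hsc : forall m, idx m != j -> exists c, y m j = c *: 1.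
  move=> m hm.
  have := Hy m (fun x => forall j', j' != idx m -> exists c, x j' = c *: 1).
  apply => //.
  - move=> s hs j' hj'; exists 0; rewrite scale0r; exact: hs.
  - by move=> d j' _; exists (d j').
  - move=> u v hu hv j' hj'; have [c1 e1] := hu j' hj'; have [c2 e2] := hv j' hj'.
    by exists (c1 + c2); rewrite /Defs.addA /= e1 e2 scalerDl.
  - move=> c0 u hu j' hj'; have [c1 e1] := hu j' hj'.
    by exists (c0 * c1); rewrite /Defs.scaleA /= e1 scalerA.
  - move=> u v hu hv j' hj'; have [c1 e1] := hu j' hj'; have [c2 e2] := hv j' hj'.
    exists (c1 * c2); rewrite /Defs.mulA /= e1 e2 -scalerAl mul1r scalerA //.
  - by rewrite eq_sym.
have [k hk] : exists k, idx k != j.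
  case: (eqVneq (idx l) j) => e; last by exists l.
  by exists l'; rewrite -e eq_sym.
have [c hc] := hsc k hk.
have n2 : (1 < n)%N.
  rewrite ltnNge; apply/negP => hn.
  have h1 := leq_trans (ltn_ord l) hn; have h2 := leq_trans (ltn_ord l') hn.
  move: h1 h2; rewrite !ltnS !leqn0 => /eqP h1 /eqP h2.
  have ell' : l = l' by apply: val_inj; rewrite /= h1 h2.
  by rewrite ell' eqxx in hll'.
have one_NC : one_part n \in @NC n.
  rewrite NCE; apply/andP; split.
    apply/and3P; split.
    - by rewrite /one_part cover1.
    - exact: trivIset1.
    - rewrite /one_part inE eq_sym; apply/set0Pn; exists k; by rewrite inE.
  apply: ncI => V W a b c0 d; rewrite /one_part !inE => /eqP -> /eqP ->.
  by rewrite eqxx.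
have := @inversion_zero R[i] _ (@NC n) [pred P | (P \in @NC n) && ([set k] \in P)]
  (@refines n) _ _ _ (one_part n) (pk k)
  (Phi (phi j) (fun m => y m j)).
rewrite /cumulant /muNC; apply.
- by move=> x _; apply: refines_refl.
- move=> x z; rewrite !NCE => /andP[hx _] /andP[hz _]; exact: refines_anti.
- by move=> x z w _ _ _; apply: refines_trans.
- by move=> x /andP[].
- exact: one_NC.
- move=> x _; apply/refinesP => V _; exists [set: 'I_n]; rewrite ?inE ?subsetT //.
- rewrite inE one_NC /= /one_part inE; apply/negP => /eqP e.
  have := cards1 k; rewrite e cardsT card_ord => e1.
  by rewrite e1 ltnn in n2.
- move=> x; rewrite NCE => /andP[hx ncx]; rewrite inE NCE pk_part //= pk_nc //.
  exact: pk_sing.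
- by move=> x; rewrite NCE => /andP[hx _]; apply: pk_le.
- move=> x s; rewrite NCE => /andP[hx _]; rewrite inE NCE => /andP[/andP[hs _] ks].
  exact: pk_max.
- move=> x; rewrite NCE => /andP[hx _]; apply: Phi_pk => //.
  exact: hc.
Qed.
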